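(* Every conserved interval $I$ of $\mathcal{P}$ admits a unique inclusion-maximal set of frontiers, denoted $F_I$. Moreover, every conserved interval $I$ of $\mathcal{P}$ with $|I|\geq 2$ satisfies one of the following: (1) $I$ is strong; (2) $I$ is weak and there exist a unique strong conserved interval $J$ of $\mathcal{P}$ and two elements $f_i,f_j\in F_J$ with $f_i<f_j$ such that $I=(f_i..f_j)$; moreover, in this case $F_I=F_J\cap I$ and $J=\mathrm{Container}(I)$.
   Context: Let $n\geq 2$ and let $\mathcal{P}=\{P_1,\ldots,P_K\}$ be signed permutations of $\{1,\ldots,n\}$: each $P_k$ is an ordering of $1,\ldots,n$ in which each element carries a sign $+$ or $-$. Assume $P_1=(+1,+2,\ldots,+n)$ and that every $P_k$ has first element $+1$ and last element $+n$. For integers $i\leq j$ write $(i..j)=\{i,\ldots,j\}$. A conserved interval of $\mathcal{P}$ is either a singleton, or a set $(a..c)$ with $a<c$ which (ignoring signs) occupies consecutive positions in every $P_k$ and which, in every $P_k$, has either $+a$ at its left end and $+c$ at its right end, or $-c$ at its left end and $-a$ at its right end. Two intervals $(i..j)$ and $(k..l)$ overlap if $i<k\leq j<l$ or $k<i\leq l<j$. A conserved interval is strong if it has at least two elements and overlaps no other conserved interval; otherwise it is weak. For a conserved interval $I=(a..c)$, a set $\{f_1,\ldots,f_k\}$ with $a=f_1<\cdots<f_k=c$ is a set of frontiers of $I$ if $(f_i..f_j)$ is a conserved interval for all $1\leq i<j\leq k$. For a conserved interval $I$, $\mathrm{Container}(I)$ is the smallest strong conserved interval containing $I$ (it exists since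 $(1..n)$ is strong). *)

(* Defs.v *)
From mathcomp Require Import all_boot.
From mathcomp Require Import finmap.

Set Implicit Arguments.
Unset Strict Implicit.
Unset Printing Implicit Defensive.

Local Open Scope fset_scope.

(* A signed element: (sign, value), sign = true means '+'. *)
Definition selt := (bool * nat)%type.
Definition sperm := seq selt.
(* An interval (i..j) is represented by the pair (i, j), with i <= j. *)
Definition interval := (nat * nat)%type.

Definition is_sperm (n : nat) (P : sperm) : Prop :=
  perm_eq (map snd P) (iota 1 n).

Definition id_sperm (n : nat) : sperm := [seq (true, i) | i <- iota 1 n].

Definition valid_family (n : nat) (Ps : seq sperm) : Prop :=
  [/\ 2 <= n, Ps <> [::], head [::] Ps = id_sperm n &
      forall P, P \in Ps ->
        [/\ is_sperm n P, head (false, 0) P = (true, 1) & last (false, 0) P = (true, n)]].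

(* Element of P at position q (0-based). *)
Definition at_pos (P : sperm) (q : nat) : selt := nth (false, 0) P q.

Definition conserved_in (P : sperm) (a c : nat) : Prop :=
  exists p, p + (c - a) < size P /\
    perm_eq (map snd (take (c - a).+1 (drop p P))) (iota a (c - a).+1) /\
    ((at_pos P p = (true, a) /\ at_pos P (p + (c - a)) = (true, c)) \/
     (at_pos P p = (false, c) /\ at_pos P (p + (c - a)) = (false, a))).

Definition conserved (n : nat) (Ps : seq sperm) (I : interval) : Prop :=
  [/\ 1 <= I.1, I.1 <= I.2, I.2 <= n &
      I.1 = I.2 \/ (I.1 < I.2 /\ forall P, P \in Ps -> conserved_in P I.1 I.2)].

Definition overlap (I J : interval) : Prop :=
  (I.1 < J.1 <= I.2 /\ I.2 < J.2) \/ (J.1 < I.1 <= J.2 /\ J.2 < I.2).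

Definition subint (I J : interval) : Prop := J.1 <= I.1 /\ I.2 <= J.2.

Definition strong (n : nat) (Ps : seq sperm) (I : interval) : Prop :=
  [/\ conserved n Ps I, I.1 < I.2 &
      forall J, conserved n Ps J -> ~ overlap I J].

Definition weak (n : nat) (Ps : seq sperm) (I : interval) : Prop :=
  conserved n Ps I /\ ~ strong n Ps I.

Definition frontiers (n : nat) (Ps : seq sperm) (I : interval) (F : {fset nat}) : Prop :=
  [/\ I.1 \in F, I.2 \in F, (forall f, f \in F -> I.1 <= f <= I.2) &
      forall f g, f \in F -> g \in F -> f < g -> conserved n Ps (f, g)].

Definition max_frontiers (n : nat) (Ps : seq sperm) (I : interval) (F : {fset nat}) : Prop :=
  frontiers n Ps I F /\
  forall G, frontiers n Ps I G -> F `<=` G -> G = F.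

Definition is_container (n : nat) (Ps : seq sperm) (I J : interval) : Prop :=
  [/\ strong n Ps J, subint I J &
      forall J', strong n Ps J' -> subint I J' -> subint J J'].

Definition fset_in (F : {fset nat}) (I : interval) : {fset nat} :=
  [fset x in F | I.1 <= x <= I.2].

(* Main.v *)
Require Import Defs.
From mathcomp Require Import all_boot.
From mathcomp Require Import finmap.
From mathcomp Require Import zify.
From Stdlib Require Import Lia ClassicalEpsilon Classical.
Set Implicit Arguments.
Unset Strict Implicit.

Ltac bsplit := repeat match goal with H : is_true (_ && _) |- _ => case/andP: H => ? ? end.
Ltac nlia := bsplit; try (apply/andP; split); lia.

Definition val (P : sperm) i := (at_pos P i).2.

Lemma nth_snd (P : sperm) i : nth 0 (map snd P) i = val P i.
Proof.
rewrite /val /at_pos; case: (ltnP i (size P)) => h.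
  by rewrite (nth_map (false,0)).
by rewrite !nth_default ?size_map.
Qed.

Lemma val_inj (P : sperm) i j : uniq (map snd P) -> i < size P -> j < size P ->
  val P i = val P j -> i = j.
Proof.
move=> U hi hj e; apply/eqP; rewrite -(nth_uniq 0 _ _ U) ?size_map //.
by rewrite !nth_snd e.
Qed.

Lemma mem_winP (P : sperm) p L v : p + L <= size P ->
  reflect (exists2 i, p <= i < p + L & val P i = v)
          (v \in map snd (take L (drop p P))).
Proof.
move=> h; rewrite map_take map_drop.
have hs : size (take L (drop p (map snd P))) = L.
  apply: size_takel; rewrite size_drop size_map; set m := size P in h *; nlia.
apply: (iffP (nthP 0)).
  case=> i; rewrite hs => hi <-; exists (p + i); first lia.
  by rewrite nth_take // nth_drop nth_snd.
case=> i hi <-; exists (i - p); first by rewrite hs; nlia.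
by rewrite nth_take ?nth_drop ?nth_snd; [congr val; nlia | lia].
Qed.

Definition win P a c p q :=
  [/\ q < size P, p <= q, (forall i, p <= i <= q -> a <= val P i <= c),
      (forall v, a <= v <= c -> exists2 i, p <= i <= q & val P i = v) &
      ((at_pos P p = (true,a) /\ at_pos P q = (true,c)) \/
       (at_pos P p = (false,c) /\ at_pos P q = (false,a)))].

Lemma win_len (P : sperm) a c p q : uniq (map snd P) -> win P a c p q -> q - p = c - a.
Proof.
move=> U [hq hpq hin hcov _].
have hac : a <= c by have := hin p ltac:(nlia); nlia.
have Us : uniq (map (val P) (iota p (q - p).+1)).
  rewrite map_inj_in_uniq ?iota_uniq // => i j; rewrite !mem_iota => hi hj.
  apply: val_inj => //; nlia.
have E : map (val P) (iota p (q - p).+1) =i iota a (c - a).+1.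
  move=> v; rewrite mem_iota; apply/mapP/idP.
    case=> i; rewrite mem_iota => hi ->.
    have := hin i ltac:(nlia); move/andP => [h1 h2]; nlia.
  move=> hv; have [i hi <-] := hcov v ltac:(nlia).
  by exists i => //; rewrite mem_iota; nlia.
have := perm_size (uniq_perm Us (iota_uniq _ _) E).
rewrite size_map !size_iota.
have := hin p ltac:(nlia); move/andP => [h1 h2]; nlia.
Qed.

Lemma win_pos (P : sperm) a c p q j : uniq (map snd P) -> win P a c p q ->
  j < size P -> a <= val P j <= c -> p <= j <= q.
Proof.
move=> U [hq hpq hin hcov _] hj hv.
have [i hi e] := hcov _ hv.
have -> // : j = i.
apply: val_inj => //; nlia.
Qed.

Lemma conserved_in_win (P : sperm) a c : uniq (map snd P) -> a <= c ->
  conserved_in P a c <-> exists p q, win P a c p q.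
Proof.
move=> U hac; split.
  case=> p [hp [hperm hend]]; exists p, (p + (c - a)); split => //; first lia.
  - move=> i hi.
    have : val P i \in map snd (take (c - a).+1 (drop p P)).
      by apply/mem_winP; [lia | exists i => //; nlia].
    rewrite (perm_mem hperm) mem_iota; nlia.
  - move=> v hv.
    have : v \in map snd (take (c - a).+1 (drop p P)).
      by rewrite (perm_mem hperm) mem_iota; nlia.
    case/mem_winP; first lia.
    by move=> i hi e; exists i => //; nlia.
case=> p [q w]; have hl := win_len U w.
case: w => hq hpq hin hcov hend.
exists p; split; first lia.
split; last by rewrite -hl subnKC.
apply: uniq_perm.
- by rewrite map_take map_drop take_uniq // drop_uniq.
- exact: iota_uniq.
move=> v; rewrite mem_iota; apply/idP/idP.
  case/mem_winP; first lia.
  move=> i hi <-; have := hin i ltac:(nlia); move/andP => [h1 h2]; nlia.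
move=> hv; apply/mem_winP; first lia.
have [i hi e] := hcov v ltac:(nlia).
by exists i => //; nlia.
Qed.

Lemma vE (P : sperm) i s v : at_pos P i = (s, v) -> val P i = v.
Proof. by rewrite /val => ->. Qed.

Lemma wpos (P : sperm) a c p q : uniq (map snd P) -> win P a c p q ->
  forall j, j < size P -> a <= val P j <= c -> p <= j <= q.
Proof. move=> U w j; exact: win_pos U w. Qed.

Lemma chain_win (P : sperm) a b c p1 q1 p2 q2 : uniq (map snd P) -> a < b -> b < c ->
  win P a b p1 q1 -> win P b c p2 q2 -> exists p q, win P a c p q.
Proof.
move=> U hab hbc w1 w2.
case: w1 => hq1 hpq1 hin1 hcov1 [[e1 f1]|[e1 f1]];
case: w2 => hq2 hpq2 hin2 hcov2 [[e2 f2]|[e2 f2]].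
- have E : q1 = p2 by apply: (val_inj U); [nlia | nlia | rewrite (vE f1) (vE e2)].
  subst q1; exists p1, q2; split => //; first nlia.
  + move=> i hi; case: (leqP i p2) => h.
      by have := hin1 i ltac:(nlia); nlia.
    by have := hin2 i ltac:(nlia); nlia.
  + move=> v hv; case: (leqP v b) => h.
      by have [i hi e] := hcov1 v ltac:(nlia); exists i => //; nlia.
    by have [i hi e] := hcov2 v ltac:(nlia); exists i => //; nlia.
  + by left.
- have E : q1 = q2 by apply: (val_inj U); [nlia | nlia | rewrite (vE f1) (vE f2)].
  by rewrite E f2 in f1.
- have E : p1 = p2 by apply: (val_inj U); [nlia | nlia | rewrite (vE e1) (vE e2)].
  by rewrite E e2 in e1.
- have E : q2 = p1 by apply: (val_inj U); [nlia | nlia | rewrite (vE f2) (vE e1)].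
  subst q2; exists p2, q1; split => //; first nlia.
  + move=> i hi; case: (leqP i p1) => h.
      by have := hin2 i ltac:(nlia); nlia.
    by have := hin1 i ltac:(nlia); nlia.
  + move=> v hv; case: (leqP b v) => h.
      by have [i hi e] := hcov2 v ltac:(nlia); exists i => //; nlia.
    by have [i hi e] := hcov1 v ltac:(nlia); exists i => //; nlia.
  + by right.
Qed.

Lemma inter_win (P : sperm) a x y c p1 q1 p2 q2 : uniq (map snd P) ->
  a < x -> x < y -> y < c ->
  win P a y p1 q1 -> win P x c p2 q2 -> exists p q, win P x y p q.
Proof.
move=> U hax hxy hyc w1 w2.
have W1 := wpos U w1; have W2 := wpos U w2.
case: w1 => hq1 hpq1 hin1 hcov1 [[e1 f1]|[e1 f1]];
case: w2 => hq2 hpq2 hin2 hcov2 [[e2 f2]|[e2 f2]].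
- have := W1 p2 ltac:(nlia) ltac:(rewrite (vE e2); nlia).
  have := W2 q1 ltac:(nlia) ltac:(rewrite (vE f1); nlia).
  move=> h1 h2.
  exists p2, q1; split => //; first nlia.
  + move=> i hi; have := hin1 i ltac:(nlia); have := hin2 i ltac:(nlia); nlia.
  + move=> v hv; have [i hi e] := hcov1 v ltac:(nlia).
    have := W2 i ltac:(nlia) ltac:(rewrite e; nlia).
    by exists i => //; nlia.
  + by left.
- have := W1 q2 ltac:(nlia) ltac:(rewrite (vE f2); nlia).
  have := W2 q1 ltac:(nlia) ltac:(rewrite (vE f1); nlia).
  move=> h1 h2; have E : q1 = q2 by nlia.
  by have := vE f1; rewrite E (vE f2); lia.
- have := W1 p2 ltac:(nlia) ltac:(rewrite (vE e2); nlia).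
  have := W2 p1 ltac:(nlia) ltac:(rewrite (vE e1); nlia).
  move=> h1 h2; have E : p1 = p2 by nlia.
  by have := vE e1; rewrite E (vE e2); lia.
- have := W1 q2 ltac:(nlia) ltac:(rewrite (vE f2); nlia).
  have := W2 p1 ltac:(nlia) ltac:(rewrite (vE e1); nlia).
  move=> h1 h2.
  exists p1, q2; split => //; first nlia.
  + move=> i hi; have := hin1 i ltac:(nlia); have := hin2 i ltac:(nlia); nlia.
  + move=> v hv; have [i hi e] := hcov1 v ltac:(nlia).
    have := W2 i ltac:(nlia) ltac:(rewrite e; nlia).
    by exists i => //; nlia.
  + by right.
Qed.

Lemma diff_win (P : sperm) k1 k2 l1 l2 p1 q1 p2 q2 : uniq (map snd P) ->
  k1 < l1 -> l1 <= k2 -> k2 < l2 ->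
  win P k1 k2 p1 q1 -> win P l1 l2 p2 q2 ->
  (exists p q, win P k1 l1 p q) /\ (exists p q, win P k2 l2 p q).
Proof.
move=> U h1 h2 h3 w1 w2.
have W1 := wpos U w1; have W2 := wpos U w2.
case: w1 => hq1 hpq1 hin1 hcov1 [[e1 f1]|[e1 f1]];
case: w2 => hq2 hpq2 hin2 hcov2 [[e2 f2]|[e2 f2]].
- have := W1 p2 ltac:(nlia) ltac:(rewrite (vE e2); nlia).
  have := W2 q1 ltac:(nlia) ltac:(rewrite (vE f1); nlia).
  move=> g1 g2; split.
  + exists p1, p2; split => //; try nlia.
    * move=> i hi; have hv := hin1 i ltac:(nlia).
      case: (leqP (val P i) l1) => h; first nlia.
      have hi2 := W2 i ltac:(nlia) ltac:(nlia).
      have E : i = p2 by nlia.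
      by rewrite E (vE e2) in h; lia.
    * move=> v hv; have [i hi e] := hcov1 v ltac:(nlia).
      case: (leqP i p2) => h; first by exists i => //; nlia.
      have hv2 := hin2 i ltac:(nlia).
      have E : i = p2 by apply: (val_inj U); [nlia | nlia | rewrite (vE e2); nlia].
      lia.
    * by left.
  + exists q1, q2; split => //; try nlia.
    * move=> i hi; have hv := hin2 i ltac:(nlia).
      case: (leqP k2 (val P i)) => h; first nlia.
      have hi2 := W1 i ltac:(nlia) ltac:(nlia).
      have E : i = q1 by nlia.
      by rewrite E (vE f1) in h; lia.
    * move=> v hv; have [i hi e] := hcov2 v ltac:(nlia).
      case: (leqP q1 i) => h; first by exists i => //; nlia.
      have hv2 := hin1 i ltac:(nlia).
      have E : i = q1 by apply: (val_inj U); [nlia | nlia | rewrite (vE f1); nlia].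
      lia.
    * by left.
- have := W1 q2 ltac:(nlia) ltac:(rewrite (vE f2); nlia).
  have := W2 q1 ltac:(nlia) ltac:(rewrite (vE f1); nlia).
  move=> g1 g2; have E : q1 = q2 by nlia.
  by rewrite E f2 in f1.
- have := W1 p2 ltac:(nlia) ltac:(rewrite (vE e2); nlia).
  have := W2 p1 ltac:(nlia) ltac:(rewrite (vE e1); nlia).
  move=> g1 g2; have E : p1 = p2 by nlia.
  by rewrite E e2 in e1.
- have := W1 q2 ltac:(nlia) ltac:(rewrite (vE f2); nlia).
  have := W2 p1 ltac:(nlia) ltac:(rewrite (vE e1); nlia).
  move=> g1 g2; split.
  + exists q2, q1; split => //; try nlia.
    * move=> i hi; have hv := hin1 i ltac:(nlia).
      case: (leqP (val P i) l1) => h; first nlia.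
      have hi2 := W2 i ltac:(nlia) ltac:(nlia).
      have E : i = q2 by nlia.
      by rewrite E (vE f2) in h; lia.
    * move=> v hv; have [i hi e] := hcov1 v ltac:(nlia).
      case: (leqP q2 i) => h; first by exists i => //; nlia.
      have hv2 := hin2 i ltac:(nlia).
      have E : i = q2 by apply: (val_inj U); [nlia | nlia | rewrite (vE f2); nlia].
      lia.
    * by right.
  + exists p2, p1; split => //; try nlia.
    * move=> i hi; have hv := hin2 i ltac:(nlia).
      case: (leqP k2 (val P i)) => h; first nlia.
      have hi2 := W1 i ltac:(nlia) ltac:(nlia).
      have E : i = p1 by nlia.
      by rewrite E (vE e1) in h; lia.
    * move=> v hv; have [i hi e] := hcov2 v ltac:(nlia).
      case: (leqP i p1) => h; first by exists i => //; nlia.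
      have hv2 := hin1 i ltac:(nlia).
      have E : i = p1 by apply: (val_inj U); [nlia | nlia | rewrite (vE e1); nlia].
      lia.
    * by right.
Qed.

Section Lift.
Variables (n : nat) (Ps : seq sperm).
Hypothesis V : valid_family n Ps.

Lemma vuniq P : P \in Ps -> uniq (map snd P).
Proof.
case: V => _ _ _ h hP; case: (h P hP) => hs _ _.
by rewrite (perm_uniq hs) iota_uniq.
Qed.

Lemma cons_single x : 1 <= x <= n -> conserved n Ps (x, x).
Proof. by move=> /andP[h1 h2]; split => //; left. Qed.

Lemma cons_bounds a c : conserved n Ps (a, c) -> [/\ 1 <= a, a <= c & c <= n].
Proof. by case. Qed.

Lemma cons_win a c : conserved n Ps (a, c) -> a < c ->
  forall P, P \in Ps -> exists p q, win P a c p q.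
Proof.
case=> /= h1 h2 h3 [e|[_ h]] hac P hP; first lia.
by apply/(conserved_in_win (vuniq hP) h2); apply: h.
Qed.

Lemma mk_cons a c : 1 <= a -> a < c -> c <= n ->
  (forall P, P \in Ps -> exists p q, win P a c p q) -> conserved n Ps (a, c).
Proof.
move=> h1 h2 h3 h; split => //=; first lia.
right; split => // P hP.
by apply/(conserved_in_win (vuniq hP) (ltnW h2)); apply: h.
Qed.

Lemma gen_chain a b c : conserved n Ps (a, b) -> conserved n Ps (b, c) ->
  conserved n Ps (a, c).
Proof.
move=> h1 h2; have [x1 x2 x3] := cons_bounds h1; have [y1 y2 y3] := cons_bounds h2.
have [e|hab] := eqVneq a b; first by rewrite e.
have [e|hbc] := eqVneq b c; first by rewrite -e.
have {}hab : a < b by lia.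
have {}hbc : b < c by lia.
apply: mk_cons => //; try lia.
move=> P hP; have [p1 [q1 w1]] := cons_win h1 hab hP.
have [p2 [q2 w2]] := cons_win h2 hbc hP.
exact: chain_win (vuniq hP) hab hbc w1 w2.
Qed.

Lemma gen_int a x y c : conserved n Ps (a, y) -> conserved n Ps (x, c) ->
  a <= x -> x <= y -> y <= c -> conserved n Ps (x, y).
Proof.
move=> h1 h2 hax hxy hyc; have [x1 x2 x3] := cons_bounds h1; have [y1 y2 y3] := cons_bounds h2.
have [e|hxy'] := eqVneq x y; first by rewrite e; apply: cons_single; nlia.
have [e|hax'] := eqVneq a x; first by rewrite -e.
have [e|hyc'] := eqVneq y c; first by rewrite e.
have {}hxy' : x < y by lia.
have {}hax' : a < x by lia.
have {}hyc' : y < c by lia.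
apply: mk_cons => //; try lia.
move=> P hP; have [p1 [q1 w1]] := cons_win h1 ltac:(lia) hP.
have [p2 [q2 w2]] := cons_win h2 ltac:(lia) hP.
exact: inter_win (vuniq hP) hax' hxy' hyc' w1 w2.
Qed.

Lemma gen_diff k1 k2 l1 l2 : conserved n Ps (k1, k2) -> conserved n Ps (l1, l2) ->
  k1 < l1 -> l1 <= k2 -> k2 < l2 ->
  conserved n Ps (k1, l1) /\ conserved n Ps (k2, l2).
Proof.
move=> h1 h2 a1 a2 a3; have [x1 x2 x3] := cons_bounds h1; have [y1 y2 y3] := cons_bounds h2.
split; apply: mk_cons => //; try lia;
move=> P hP; have [p1 [q1 w1]] := cons_win h1 ltac:(lia) hP;
have [p2 [q2 w2]] := cons_win h2 ltac:(lia) hP;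
have [] := diff_win (vuniq hP) a1 a2 a3 w1 w2 => //.
Qed.


Local Open Scope fset_scope.
Definition pb (Q : Prop) : bool := if excluded_middle_informative Q then true else false.
Lemma pbP Q : reflect Q (pb Q).
Proof. rewrite /pb; case: excluded_middle_informative => h; by constructor. Qed.

Definition Fall (I : interval) : {fset nat} :=
  [fset x in iota I.1 (I.2.+1 - I.1) |
     pb (conserved n Ps (I.1, x)) && pb (conserved n Ps (x, I.2))].

Lemma Fall_mem I x : x \in Fall I <->
  [/\ I.1 <= x <= I.2, conserved n Ps (I.1, x) & conserved n Ps (x, I.2)].
Proof.
rewrite !inE mem_iota; split.
  by case/andP=> h /andP[/pbP h1 /pbP h2]; split => //; nlia.
case=> h h1 h2; apply/andP; split; first nlia.
by apply/andP; split; apply/pbP.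
Qed.

Lemma frontier_sub I F : conserved n Ps I -> frontiers n Ps I F -> F `<=` Fall I.
Proof.
case: I => a c hI [/= ha hc hb hp]; have [b1 b2 b3] := cons_bounds hI.
apply/fsubsetP => x hx; apply/Fall_mem => /=.
have hx' := hb x hx; split => //.
  have [e|ne] := eqVneq a x; first by rewrite -e; apply: cons_single; nlia.
  by apply: hp => //; nlia.
have [e|ne] := eqVneq x c; first by rewrite e; apply: cons_single; nlia.
by apply: hp => //; nlia.
Qed.

Lemma Fall_frontiers I : conserved n Ps I -> frontiers n Ps I (Fall I).
Proof.
case: I => a c hI; have [b1 b2 b3] := cons_bounds hI.
split => /=.
- by apply/Fall_mem => /=; split => //; [nlia | apply: cons_single; nlia].
- by apply/Fall_mem => /=; split => //; [nlia | apply: cons_single; nlia].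
- by move=> f /Fall_mem [].
move=> f g /Fall_mem [/= hf _ hf2] /Fall_mem [/= hg hg1 _] hfg.
apply: (gen_int hg1 hf2); nlia.
Qed.

Lemma Fall_max I : conserved n Ps I -> max_frontiers n Ps I (Fall I).
Proof.
move=> hI; split; first exact: Fall_frontiers.
move=> G hG sub; apply/eqP; rewrite eqEfsubset sub andbT.
exact: frontier_sub hI hG.
Qed.

Lemma max_Fall I F : conserved n Ps I -> max_frontiers n Ps I F -> F = Fall I.
Proof.
move=> hI [hF hmax]; apply/esym/hmax; first exact: Fall_frontiers.
exact: frontier_sub hI hF.
Qed.

Lemma part1 I : conserved n Ps I -> exists! F, max_frontiers n Ps I F.
Proof.
move=> hI; exists (Fall I); split; first exact: Fall_max.
by move=> F hF; rewrite (max_Fall hI hF).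
Qed.

Definition good (a c : nat) (J : interval) :=
  [/\ conserved n Ps J, J.1 <= a, c <= J.2,
      conserved n Ps (J.1, a) /\ conserved n Ps (a, J.2) &
      conserved n Ps (J.1, c) /\ conserved n Ps (c, J.2)].

Lemma container a c J J' : a < c -> good a c J -> strong n Ps J' ->
  subint (a, c) J' -> subint J J'.
Proof.
move=> hac [hJ h1 h2 [g1 g2] [g3 g4]] [hJ' _ nov] [/= s1 s2].
split.
  case: (leqP J'.1 J.1) => // h.
  by case: (nov _ g1); right => /=; lia.
case: (leqP J.2 J'.2) => // h.
by case: (nov _ g4); left => /=; lia.
Qed.

Lemma exists_good a c : conserved n Ps (a, c) -> a < c ->
  exists J, strong n Ps J /\ good a c J.
Proof.
move=> hI hac; have [b1 b2 b3] := cons_bounds hI.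
suff H : forall m J, n - (J.2 - J.1) <= m -> good a c J ->
  exists J', strong n Ps J' /\ good a c J'.
  apply: (H n (a, c)); first lia.
  by split => //=; split => //; apply: cons_single; nlia.
elim=> [|m IH] [p q] /= hm hg; case: (hg) => hJ /= h1 h2 [g1 g2] [g3 g4];
  have [c1 c2 c3] := cons_bounds hJ; first lia.
case: (classic (strong n Ps (p, q))) => hs; first by exists (p, q).
have [K [hK hov]] : exists K, conserved n Ps K /\ overlap (p, q) K.
  apply: NNPP => hn; apply: hs; split => //=; first lia.
  by move=> K hK hov; apply: hn; exists K.
have [k1 k2 k3] := cons_bounds hK.
case: hov => /= [[/andP[o1 o2] o3]|[/andP[o1 o2] o3]].
- have [_ d] := gen_diff hJ hK o1 o2 o3.
  apply: (IH (p, K.2)) => /=; first lia.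
  split => //=; try lia.
  + exact: gen_chain hJ d.
  + by split => //; apply: gen_chain g2 d.
  + by split => //; apply: gen_chain g4 d.
- have [d _] := gen_diff hK hJ o1 o2 o3.
  apply: (IH (K.1, q)) => /=; first lia.
  split => //=; try lia.
  + exact: gen_chain d hJ.
  + by split => //; apply: gen_chain d g1.
  + by split => //; apply: gen_chain d g3.
Qed.

Lemma good_of_max a c J FJ : a < c -> strong n Ps J -> max_frontiers n Ps J FJ ->
  a \in FJ -> c \in FJ -> good a c J.
Proof.
move=> hac hs hm ha hc; have hJ : conserved n Ps J by case: hs.
rewrite (max_Fall hJ hm) in ha hc.
case/Fall_mem: ha => h1 g1 g2; case/Fall_mem: hc => h2 g3 g4.
by split => //; nlia.
Qed.

End Lift.


Local Open Scope fset_scope.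

Lemma fset_in_mem (F : {fset nat}) (I : interval) x :
  x \in fset_in F I = (x \in F) && (I.1 <= x <= I.2).
Proof. by rewrite /fset_in inE. Qed.

Theorem theorem5 (n : nat) (Ps : seq sperm) :
  valid_family n Ps ->
  (forall I, conserved n Ps I -> exists! F, max_frontiers n Ps I F) /\
  (forall I, conserved n Ps I -> I.1 < I.2 ->
     strong n Ps I \/
     (weak n Ps I /\
      (exists! J, strong n Ps J /\
         exists FJ fi fj, [/\ max_frontiers n Ps J FJ, fi \in FJ, fj \in FJ,
                              fi < fj & I = (fi, fj)]) /\
      (forall J FJ, strong n Ps J -> max_frontiers n Ps J FJ ->
         (exists fi fj, [/\ fi \in FJ, fj \in FJ, fi < fj & I = (fi, fj)]) ->
         (forall FI, max_frontiers n Ps I FI -> FI = fset_in FJ I) /\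
         is_container n Ps I J))).
Proof.
move=> V; split; first exact: part1 V.
move=> [a c] /= hI hac.
case: (classic (strong n Ps (a, c))) => hs; [by left | right].
split; first by split.
have [J [sJ gJ]] := exists_good V hI hac.
have cJ : conserved n Ps J by case: sJ.
split.
- exists J; split.
  + split => //; exists (Fall n Ps J), a, c; split => //.
    * exact (Fall_max V cJ).
    * case: gJ => _ h1 h2 [g1 g2] _; apply/Fall_mem; split => //; nlia.
    * case: gJ => _ h1 h2 _ [g1 g2]; apply/Fall_mem; split => //; nlia.
  + move=> J' [sJ' [FJ [fi [fj [hm hi hj hlt e]]]]].
    case: e => ea ec; subst fi fj.
    have gJ' := good_of_max V hac sJ' hm hi hj.
    have s1 := container hac gJ sJ' ltac:(case: gJ' => _ ? ? _ _; split => //).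
    have s2 := container hac gJ' sJ ltac:(case: gJ => _ ? ? _ _; split => //).
    case: J s1 s2 {sJ gJ cJ} => p q; case: J' {sJ' gJ' hm} => p' q' [/= ? ?] [/= ? ?].
    by congr pair; lia.
- move=> J' FJ sJ' hm [fi [fj [hi hj hlt e]]].
  case: e => ea ec; subst fi fj.
  have cJ' : conserved n Ps J' by case: sJ'.
  have gJ' := good_of_max V hac sJ' hm hi hj.
  case: (gJ') => _ h1 h2 [g1 g2] [g3 g4].
  split.
  + move=> FI hFI; rewrite (max_Fall V hI hFI) (max_Fall V cJ' hm).
    apply/fsetP => x; rewrite fset_in_mem /=.
    apply/idP/idP.
    * move/Fall_mem => /= [hx k1 k2].
      have -> : (x \in Fall n Ps J').
        apply/Fall_mem; split; first nlia.
        - exact (gen_chain V g1 k1).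
        - exact (gen_chain V k2 g4).
      by rewrite hx.
    * case/andP => /Fall_mem [hx k1 k2] hx'.
      apply/Fall_mem => /=; split => //.
      - apply: (gen_int V k1 g2); nlia.
      - apply: (gen_int V g3 k2); nlia.
  + split => //; last by move=> J'' sJ'' sub; exact (container hac gJ' sJ'' sub).
Qed.
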